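(* For all $k\ge1$, $n\ge0$, $$b_k(n)=\sum_{\substack{n_1+\cdots+n_k=n\\ n_i\ge0}}\binom{2n}{2n_1\ 2n_2\ \cdots\ 2n_k}.$$
   Context: A labeled graph on a set $V$ of $k$ vertices with $n$ edges has $n$ directed edges labeled $1,\dots,n$, edge $i$ being an ordered pair of vertices in $V\times V$ (loops and multiple edges allowed). The degree of a vertex is the number of edges having it as initial or terminal point, a loop counted twice. The graph is balanced if every vertex has even degree; $b_k(n)$ is the number of balanced labeled graphs on $k$ (fixed, labeled) vertices with $n$ edges. $\binom{2n}{a_1\ \cdots\ a_k}$ denotes the multinomial coefficient. *)

(* Defs.v *)
From mathcomp Require Import all_boot.
Set Implicit Arguments. Unset Strict Implicit. Unset Printing Implicit Defensive.

(* A labeled graph on the vertex set 'I_k with n edges: edge i (i : 'I_n,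
   standing for label i+1) is an ordered pair (initial, terminal) of vertices;
   loops and multiple edges are allowed. *)
Definition lgraph (k n : nat) := {ffun 'I_n -> 'I_k * 'I_k}.

Definition degree (k n : nat) (g : lgraph k n) (v : 'I_k) : nat :=
  \sum_(i < n) (((g i).1 == v) + ((g i).2 == v)).

Definition balanced (k n : nat) (g : lgraph k n) : bool :=
  [forall v, ~~ odd (degree g v)].

Definition b (k n : nat) : nat := #|[pred g : lgraph k n | balanced g]|.

Definition multinomial (m : nat) (a : seq nat) : nat :=
  m`! %/ \prod_(x <- a) x`!.

(* Main.v *)
Require Import Defs.
From mathcomp Require Import all_boot zify.
Set Implicit Arguments. Unset Strict Implicit. Unset Printing Implicit Defensive.

Lemma sum_count (k : nat) (s : seq 'I_k) : \sum_(v < k) count_mem v s = size s.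
Proof.
elim: s => [|x s IH] /=; first by rewrite big1.
rewrite big_split /= IH (bigD1 x) //= eqxx big1 ?addn0 //.
by move=> v /negPf; rewrite eq_sym => ->.
Qed.

Lemma sum_tuple_cons (T : finType) m (F : m.+1.-tuple T -> nat) :
  \sum_(t : m.+1.-tuple T) F t = \sum_(v : T) \sum_(t : m.-tuple T) F [tuple of v :: t].
Proof.
rewrite pair_big /=.
rewrite (reindex (fun p : T * m.-tuple T => [tuple of p.1 :: p.2])) //=.
exists (fun t : m.+1.-tuple T => (thead t, [tuple of behead t])).
  by case=> x t _ /=; rewrite theadE; congr pair; apply: val_inj.
by move=> t _ /=; rewrite [in RHS](tuple_eta t).
Qed.

Definition cnt k m (a : 'I_k -> nat) : nat :=
  \sum_(t : m.-tuple 'I_k) [forall v, count_mem v t == a v].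

Lemma cntP k m (a : 'I_k -> nat) : \sum_(v < k) a v = m ->
  cnt m a * \prod_(v < k) (a v)`! = m`!.
Proof.
elim: m a => [|m IH] a Ha.
  have a0 : forall v, a v = 0.
    move=> v; apply/eqP; rewrite -leqn0 -Ha.
    by rewrite (bigD1 v) //= leq_addr.
  rewrite /cnt [X in _ * X = _]big1 ?muln1; last by move=> v _; rewrite a0.
  rewrite (eq_bigr (fun _ => 1)); last first.
    move=> t _; rewrite tuple0 /=.
    by apply/eqP; rewrite eqb1; apply/forallP => v; rewrite a0.
  by rewrite sum_nat_const card_tuple muln1.
rewrite /cnt sum_tuple_cons big_distrl /=.
pose b v := fun w : 'I_k => a w - (w == v).
have step : forall v, (\sum_(t : m.-tuple 'I_k)
     [forall w, count_mem w [tuple of v :: t] == a w]) * \prod_(w < k) (a w)`!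
     = a v * m`!.
  move=> v.
  case: (posnP (a v)) => av.
    rewrite av mul0n big1 ?mul0n // => t _; apply/eqP; rewrite eqb0; apply/negP => /forallP /(_ v).
    by rewrite /= eqxx av.
  have Hb : \sum_(w < k) b v w = m.
    move: Ha; rewrite (bigD1 v) //= [X in _ -> X = _](bigD1 v) //= /b eqxx.
    rewrite [X in _ - _ + X = _](eq_bigr a); first by lia.
    by move=> w /negPf ->; rewrite subn0.
  rewrite -(IH (b v) Hb) /cnt.
  have -> : \prod_(w < k) (a w)`! = a v * \prod_(w < k) (b v w)`!.
    rewrite (bigD1 v) //= [in RHS](bigD1 v) //= /b eqxx subn1.
    rewrite mulnA -{1}(prednK av) factS -(prednK av) /= prednK //.
    congr muln; apply: eq_bigr => w /negPf; by rewrite /b => ->; rewrite subn0.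
  rewrite mulnCA; congr muln; congr muln; apply: eq_bigr => t _.
  congr nat_of_bool; apply: eq_forallb => w /=.
  rewrite /b; case: (eqVneq w v) => [->|nw].
    by apply/eqP/eqP; lia.
  by rewrite add0n subn0.
rewrite (eq_bigr _ (fun v _ => step v)) -big_distrl /= Ha.
by rewrite factS mulnC.
Qed.
Section G.
Variables k n : nat.
Definition phi (g : lgraph k n) : (n+n).-tuple 'I_k :=
  [tuple of [tuple (g i).1 | i < n] ++ [tuple (g i).2 | i < n]].
Definition psi (t : (n+n).-tuple 'I_k) : lgraph k n :=
  [ffun i => (tnth t (lshift n i), tnth t (rshift n i))].

Lemma count_mk (f : 'I_n -> 'I_k) v :
  count_mem v [tuple f i | i < n] = \sum_(i < n) (f i == v).
Proof.
rewrite /= -sum1_count big_map big_enum_cond /= big_mkcond /=.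
by apply: eq_bigr => i _; case: (f i == v).
Qed.

Lemma count_phi g v : count_mem v (phi g) = degree g v.
Proof. by rewrite /phi /= count_cat !count_mk /degree big_split. Qed.

Lemma phi_bij : bijective phi.
Proof.
exists psi.
  move=> g; apply/ffunP => i; rewrite ffunE /phi tnth_lshift tnth_rshift !tnth_mktuple.
  by case: (g i).
move=> t; apply: eq_from_tnth => j; rewrite /phi.
rewrite -(splitK j); case: (split j) => i /=.
  by rewrite tnth_lshift tnth_mktuple ffunE.
by rewrite tnth_rshift tnth_mktuple ffunE.
Qed.
End G.

Lemma fiber_sum k n (t : (n+n).-tuple 'I_k) :
  \sum_(c : {ffun 'I_k -> 'I_n.+1} | \sum_(i < k) (c i : nat) == n)
     [forall v, count_mem v t == 2 * c v] = [forall v, ~~ odd (count_mem v t)].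
Proof.
have tot := sum_count t; rewrite size_tuple in tot.
have cle : forall v, count_mem v t <= n + n.
  by move=> v; rewrite -[X in _ <= X]tot (bigD1 v) //= leq_addr.
case: (boolP [forall v, ~~ odd (count_mem v t)]) => [/forallP ev|nev]; last first.
  rewrite big1 // => c _; apply/eqP; rewrite eqb0; apply/negP => /forallP H.
  move/negP: nev; apply; apply/forallP => v.
  by rewrite (eqP (H v)) oddM.
pose c0 : {ffun 'I_k -> 'I_n.+1} := [ffun v => inord (count_mem v t)./2].
have c0E : forall v, (c0 v : nat) = (count_mem v t)./2.
  move=> v; rewrite ffunE inordK //.
  have h := odd_double_half (count_mem v t); rewrite (negbTE (ev v)) add0n -mul2n in h.
  by rewrite ltnS -(leq_pmul2l (isT : 0 < 2)) h mul2n -addnn cle.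
have c0P : forall v, count_mem v t = 2 * c0 v.
  move=> v; rewrite c0E -{1}(odd_double_half (count_mem v t)) (negbTE (ev v)) add0n.
  by rewrite mul2n.
have sc0 : \sum_(i < k) (c0 i : nat) == n.
  apply/eqP; apply/eqP; rewrite -(eqn_pmul2l (isT : 0 < 2)) big_distrr /=.
  by rewrite -(eq_bigr _ (fun i _ => c0P i)) tot; apply/eqP; lia.
rewrite (bigD1 c0) //= big1 ?addn0.
  by apply/eqP; rewrite eqb1; apply/forallP => v; rewrite c0P.
move=> c /andP [_ nc]; apply/eqP; rewrite eqb0; apply/negP => /forallP H.
move/negP: nc; apply; apply/eqP/ffunP => v; apply: val_inj => /=.
have := eqP (H v); rewrite c0P; lia.
Qed.

Theorem mainTheorem13 (k n : nat) (hk : 1 <= k) :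
  b k n =
  \sum_(c : {ffun 'I_k -> 'I_n.+1} | \sum_(i < k) (c i : nat) == n)
     multinomial (2 * n) [seq 2 * (c i : nat) | i : 'I_k].
Proof.
have -> : b k n = \sum_(g : lgraph k n) balanced g.
  rewrite /b -sum1_card big_mkcond /=; apply: eq_bigr => g _.
  by rewrite inE; case: (balanced g).
have -> : \sum_(g : lgraph k n) balanced g =
          \sum_(t : (n+n).-tuple 'I_k) [forall v, ~~ odd (count_mem v t)].
  rewrite (reindex (@phi k n)) /=; last by apply: onW_bij; apply: phi_bij.
  apply: eq_bigr => g _; rewrite /balanced; congr nat_of_bool.
  by apply: eq_forallb => v; rewrite count_phi.
rewrite (eq_bigr _ (fun t _ => esym (@fiber_sum k n t))).
rewrite exchange_big /=; apply: eq_bigr => c /eqP sc.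
have Hs : \sum_(v < k) (fun v => 2 * c v) v = n + n.
  by rewrite /= -big_distrr /= sc; lia.
have := cntP Hs; rewrite /cnt => E.
rewrite /multinomial big_map big_enum /=.
have -> : (2 * n)`! = (n + n)`! by congr factorial; lia.
rewrite -E mulnK //; apply: prodn_gt0 => i; exact: fact_gt0.
Qed.
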